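(* Let $T$ be a string of length $n$ and $1<i\le j\le n$. For any interval $[s,t]$ with $i\le s\le t\le j$, we have $[s,t]\notin\mathsf{MUS}(T[i-1..j])$ and $[s,t]\in\mathsf{MUS}(T[i..j])$ if and only if $T[s..t]=\mathit{sqp}_{i-1,j}$ (as strings) and $\#\mathit{occ}_{T[i-1..j]}(\mathit{sqp}_{i-1,j})=2$.
   Context: $T[a..b]$ denotes the substring of $T$ from position $a$ to $b$. For strings $S,w$, $\#\mathit{occ}_S(w)$ is the number of positions at which $w$ occurs in $S$, with $\#\mathit{occ}_S(\varepsilon)=|S|+1$. A substring $w$ of $S$ is unique in $S$ if $\#\mathit{occ}_S(w)=1$ and repeating if $\#\mathit{occ}_S(w)\ge 2$. For $1\le i\le j\le n$, $\mathsf{MUS}(T[i..j])$ is the set of intervals $[s,t]$ (positions in $T$) with $i\le s\le t\le j$ such that $T[s..t]$ is unique in $T[i..j]$ and every proper substring of $T[s..t]$ (including the empty string) is repeating in $T[i..j]$. $\mathit{sqp}_{i,j}$ is the shortest (non-empty) prefix of $T[i..j]$ that occurs at most twice in $T[i..j]$. *)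

(* Defs.v *)
From mathcomp Require Import all_boot.
Set Implicit Arguments. Unset Strict Implicit. Unset Printing Implicit Defensive.

(* T[a..b] with 1-based positions: the characters at positions a, a+1, ..., b.
   (Empty when b < a.) *)
Definition substr (A : eqType) (T : seq A) (a b : nat) : seq A :=
  take (b.+1 - a) (drop a.-1 T).

(* #occ_S(w): number of start positions p (0-based, 0 <= p <= |S|-|w|)
   at which w occurs in S.  For w = [::] this is |S|+1. *)
Definition occ (A : eqType) (S w : seq A) : nat :=
  count (fun p => take (size w) (drop p S) == w) (iota 0 (size S - size w).+1).

Definition isMUS (A : eqType) (T : seq A) (i j s t : nat) : Prop :=
  [/\ i <= s, s <= t, t <= j,
      occ (substr T i j) (substr T s t) = 1 &
      forall u : seq A, infix u (substr T s t) -> size u < size (substr T s t) ->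
        2 <= occ (substr T i j) u].

(* sqp_{i,j}: the shortest non-empty prefix of T[i..j] occurring at most twice
   in T[i..j]  (take k.+1 S for the least k with occ S (take k.+1 S) <= 2). *)
Definition sqp (A : eqType) (T : seq A) (i j : nat) : seq A :=
  let S := substr T i j in
  take (find (fun k => occ S (take k.+1 S) <= 2) (iota 0 (size S))).+1 S.

(* Main.v *)
Require Import Defs.
From mathcomp Require Import all_boot.
From mathcomp Require Import zify.
Set Implicit Arguments. Unset Strict Implicit. Unset Printing Implicit Defensive.

Section S.
Variable A : eqType.
Implicit Types S w u x y : seq A.

Lemma occ_cons a S u :
  occ (a :: S) u = (take (size u) (a :: S) == u) + occ S u.
Proof.
rewrite /occ (_ : size (a :: S) = (size S).+1) //.
case: (leqP (size u) (size S)) => H.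
  rewrite (_ : (size S).+1 - size u = (size S - size u).+1); last by lia.
  set n := (size S - size u).+1.
  rewrite (_ : iota 0 n.+1 = 0 :: map (addn 1) (iota 0 n)); last by rewrite -iotaDl.
  rewrite /= count_map drop0; congr (_ + _); apply: eq_count => p /=.

rewrite (_ : (size S).+1 - size u = 0); last by lia.
rewrite (_ : size S - size u = 0); last by lia.
rewrite /= drop0.
suff -> : (take (size u) S == u) = false by rewrite !addn0.
apply/negbTE/eqP => E; have := congr1 size E; rewrite size_take; case: ltnP => H1 H2; lia.
Qed.

Lemma occ_nil S : occ S [::] = (size S).+1.
Proof.
rewrite /occ subn0 (eq_count (a2 := predT)) ?count_predT ?size_iota //.
by move=> p; rewrite /= take0.
Qed.

Lemma occ_pos S u q : 0 < size u -> take (size u) (drop q S) = u -> q < (size S - size u).+1.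
Proof.
move=> up E; have := congr1 size E; rewrite size_take size_drop.
case: ltnP => H1 H2; lia.
Qed.

Lemma occ_ge2 S u q1 q2 : 0 < size u -> take (size u) (drop q1 S) = u ->
  take (size u) (drop q2 S) = u -> q1 != q2 -> 2 <= occ S u.
Proof.
move=> up E1 E2 N; rewrite /occ -size_filter.
apply: (uniq_leq_size (s1 := [:: q1; q2])).
  by rewrite /= inE N.
move=> q; rewrite !inE mem_filter mem_iota add0n /= => /orP [] /eqP ->.
  by rewrite E1 eqxx (occ_pos up E1).
by rewrite E2 eqxx (occ_pos up E2).
Qed.

Lemma occ_get S u : 1 <= occ S u -> exists q, take (size u) (drop q S) = u.
Proof.
rewrite /occ -has_count => /hasP [q _ /eqP E]; by exists q.
Qed.

Lemma shift_occ S q x u y : take (size (x ++ u ++ y)) (drop q S) = x ++ u ++ y ->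
  take (size u) (drop (q + size x) S) = u.
Proof.
move=> E; have D := cat_take_drop (size (x ++ u ++ y)) (drop q S).
rewrite E in D.
by rewrite addnC -drop_drop -D -!catA drop_size_cat // take_size_cat.
Qed.

Lemma occ_self S : occ S S = 1.
Proof. by rewrite /occ subnn /= drop0 take_size eqxx. Qed.

Definition MUSP (X w : seq A) := occ X w = 1 /\
  forall u, infix u w -> size u < size w -> 2 <= occ X u.

Definition sqpS (X : seq A) := take (find (fun k => occ X (take k.+1 X) <= 2) (iota 0 (size X))).+1 X.

Lemma main a S w : 0 < size S ->
  ((~ MUSP (a :: S) w /\ MUSP S w) <->
   (w = sqpS (a :: S) /\ occ (a :: S) (sqpS (a :: S)) = 2)).
Proof.
move=> Spos; set S' := a :: S.
set P := (fun k => occ S' (take k.+1 S') <= 2).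
have Hfind : forall k, k < find P (iota 0 (size S')) -> 2 < occ S' (take k.+1 S').
  move=> k Hk; have Hk' : k < size S'.
    by have := find_size P (iota 0 (size S')); rewrite size_iota; lia.
  have := before_find 0 Hk; rewrite nth_iota // /P add0n => /negbT.
  by rewrite -ltnNge.
split.
- move=> [NM [O1 Hu]].
  have Hu' : forall u, infix u w -> size u < size w -> 2 <= occ S' u.
    by move=> u H1 H2; rewrite occ_cons; apply: leq_trans (Hu u H1 H2) (leq_addl _ _).
  have Pre : take (size w) S' = w.
    apply/eqP; case Hn: (take (size w) S' == w) => //.
    by exfalso; apply: NM; split => //; rewrite occ_cons Hn O1.
  have O2 : occ S' w = 2 by rewrite occ_cons Pre eqxx O1.
  have wne : 0 < size w.
    case: w O1 {NM Hu Hu' Pre O2} => // ; rewrite occ_nil; lia.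
  have wle : size w <= size S' by rewrite -Pre size_take; case: ltnP => // /ltnW.
  suff Ek : find P (iota 0 (size S')) = (size w).-1.
    by rewrite /sqpS -/P Ek prednK // Pre O2.
  apply/eqP; rewrite eqn_leq; apply/andP; split.
    rewrite leqNgt; apply/negP => Hlt.
    have := Hfind _ Hlt; rewrite prednK // Pre O2 //.
  rewrite leqNgt; apply/negP => Hlt.
  set k := find _ _ in Hlt *.
  have Hk : k < size S' by lia.
  have Hhas : has P (iota 0 (size S')) by rewrite has_find size_iota.
  have := nth_find 0 Hhas; rewrite -/k nth_iota // /P add0n.
  have E : take k.+1 S' = take k.+1 w by rewrite -Pre take_takel //; lia.
  rewrite E occ_cons.
  have Hp : take (size (take k.+1 w)) S' = take k.+1 w.
    rewrite -E size_take; case: ltnP => H1; [by [] | by rewrite take_size take_oversize].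
  rewrite Hp eqxx.
  have : 2 <= occ S (take k.+1 w).
    apply: Hu.
      by rewrite -{2}(cat_take_drop k.+1 w) prefix_infix.
    by rewrite size_take (_ : k.+1 < size w) //; lia.
  move=> /= H1 H2; lia.
- move=> [Ew O2].
  set k := find P (iota 0 (size S')) in Ew.
  have Ew' : w = take k.+1 S' by rewrite Ew.
  have Pre : take (size w) S' = w.
    by rewrite Ew' size_take; case: ltnP => // H; rewrite take_size take_oversize.
  rewrite -Ew in O2.
  have O1 : occ S w = 1 by move: O2; rewrite occ_cons Pre eqxx; lia.
  split; first by case; rewrite O2.
  split => // u /infixP [x [y Dw]] Hs.
  case: u Dw Hs => [|u0 u'] Dw Hs; first by rewrite occ_nil; lia.
  set u := u0 :: u' in Dw Hs *.
  case: x Dw => [|x0 x'] Dw.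
    have Hk : (size u).-1 < k.
      have : size w <= k.+1 by rewrite Ew' size_take; case: ltnP => //; lia.
      move: Hs; rewrite /u /= => Hs' H'; lia.
    have Eu : take (size u) S' = u.
      have Pre' := Pre; rewrite Dw cat0s in Pre'.
      by rewrite -(take_takel _ (leq_addr (size y) (size u))) -size_cat Pre' take_size_cat.
    have := Hfind _ Hk; rewrite (_ : (size u).-1.+1 = size u) // Eu occ_cons Eu eqxx => /= H; lia.
  have [q Eq] := occ_get (eq_leq (esym O1)).
  have E1 := Eq; rewrite Dw in E1.
  have E1' := shift_occ (x := x0 :: x') E1.
  have E2 : take (size (x' ++ u ++ y)) (drop 0 S) = x' ++ u ++ y.
    by move: Pre; rewrite Dw /= drop0 => [[]].
  have E2' := shift_occ E2.
  apply: (occ_ge2 _ E1' E2'); rewrite /=; lia.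
Qed.

End S.

Theorem lemma17 (A : eqType) (T : seq A) (i j s t : nat) :
  1 < i -> i <= j -> j <= size T -> i <= s -> s <= t -> t <= j ->
  ((~ isMUS T i.-1 j s t /\ isMUS T i j s t) <->
   (substr T s t = sqp T i.-1 j /\ occ (substr T i.-1 j) (sqp T i.-1 j) = 2)).
Proof.
move=> i1 ij jT iS st tj.
have [a Ea] : exists a, substr T i.-1 j = a :: substr T i j.
  case: T jT => [|b T'] jT; first by rewrite /= in jT; lia.
  exists (nth b (b :: T') i.-2).
  rewrite /substr (_ : j.+1 - i.-1 = (j.+1 - i).+1); last by lia.
  rewrite (drop_nth b); last by rewrite /= in jT *; lia.
  rewrite (_ : i.-2.+1 = i.-1) //; lia.
have Spos : 0 < size (substr T i j).
  rewrite /substr size_take size_drop; case: ifP => H; lia.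
have Hsqp : sqp T i.-1 j = sqpS (substr T i.-1 j) by [].
rewrite Hsqp Ea -(main a (substr T s t) Spos) /MUSP /isMUS Ea.
split.
- move=> [NM [_ _ _ O H]]; split; last by split.
  by move=> [O' H']; apply: NM; split => //; lia.
- move=> [NM [O H]]; split; last by split.
  by move=> [_ _ _ O' H']; apply: NM; split.
Qed.
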